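(* The Ranked Pairs VCCR $rp$, the Beat Path VCCR $bp$, and the GOCHA VCCR $gocha$ each satisfy Coherent Defeat: for every profile $\mathbf P$ and $x,y\in X(\mathbf P)$, if $\mathrm{Margin}_{\mathbf P}(x,y)>0$ and there is no majority path from $y$ to $x$, then $(x,y)$ belongs to $rp(\mathbf P)$, $bp(\mathbf P)$ and $gocha(\mathbf P)$.
   Context: Profiles: $\mathbf P:V\to\mathcal L(X)$, $V$ nonempty finite set of voters, $X=X(\mathbf P)$ nonempty finite set of candidates, $\mathcal L(X)$ strict linear orders. $\mathrm{Margin}_{\mathbf P}(x,y)$ = #voters ranking $x$ above $y$ minus #ranking $y$ above $x$. A majority path from $x_1$ to $x_n$ is $(x_1,\dots,x_n)$ with all $\mathrm{Margin}_{\mathbf P}(x_i,x_{i+1})>0$; its strength is the minimum of these margins. Ranked Pairs: let $Pairs(\mathbf P)=\{(x,y): x\ne y,\ \mathrm{Margin}_{\mathbf P}(x,y)\ge 0\}$; a tie-breaker is a strict linear order $L$ on $Pairs(\mathbf P)$. Order $Pairs(\mathbf P)$ by decreasing margin, breaking ties by $L$: $(x_1,y_1),\dots,(x_m,y_m)$. Let $D_0=\varnothing$, and $D_i=D_{i-1}\cup\{(x_i,y_i)\}$ if this is acyclic, else $D_i=D_{i-1}\cup\{(y_i,x_i)\}$; set $rp(\mathbf P,L)=D_m$ and $rp(\mathbf P)=\bigcap_L rp(\mathbf P,L)$ over all tie-breakers $L$. Beat Path: $\mathrm{Strength}_{\mathbf P}(x,y)$ is the maximum strength of a majority path from $x$ to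 $y$ ($0$ if none); $(x,y)\in bp(\mathbf P)$ iff $\mathrm{Strength}_{\mathbf P}(x,y)>\mathrm{Strength}_{\mathbf P}(y,x)$. GOCHA: $(x,y)\in gocha(\mathbf P)$ iff there is a majority path from $x$ to $y$ but none from $y$ to $x$. *)

(* Defs.v *)
From HB Require Import structures.
From mathcomp Require Import all_boot all_order all_algebra.
From mathcomp Require Import boolp.
Set Implicit Arguments. Unset Strict Implicit. Unset Printing Implicit Defensive.
Import Order.TTheory GRing.Theory Num.Theory.

Section Voting.
Variables (V X : finType).

Definition strict_linear_order (R : rel X) : Prop :=
  [/\ irreflexive R, transitive R & forall a b, a != b -> R a b || R b a].

(** A profile: each voter v : V is assigned a strict linear order P v on X
    (P v a b means voter v ranks a above b). *)
Definition is_profile (P : V -> rel X) : Prop :=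
  forall v, strict_linear_order (P v).

Definition margin (P : V -> rel X) (a b : X) : int :=
  (Posz #|[set v | P v a b]| - Posz #|[set v | P v b a]|)%R.

(** x :: p is a majority path from x to y: (x = x_1, x_2, ..., x_n = y), n >= 2,
    every consecutive margin positive. *)
Definition majority_path (P : V -> rel X) (x : X) (p : seq X) (y : X) : bool :=
  [&& p != [::], path (fun a b => (0 < margin P a b)%R) x p & last x p == y].

Definition exists_majority_path (P : V -> rel X) (x y : X) : Prop :=
  exists p, majority_path P x p y.

Definition path_strength (P : V -> rel X) (x : X) (p : seq X) : int :=
  match pairmap (margin P) x p with
  | [::] => 0%R
  | m :: ms => foldr Order.min m ms
  end.

(** Strength_P(x,y): maximum strength of a majority path from x to y, 0 if none.
    Strengths of majority paths are positive margins, hence lie in 1..#|V|,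
    so the maximum is taken over k <= #|V|. *)
Definition Strength (P : V -> rel X) (x y : X) : int :=
  Posz (\max_(k < #|V|.+1 |
        `[< exists p, majority_path P x p y /\ path_strength P x p = Posz k >])
      (k : nat))%N.

Definition bp (P : V -> rel X) (x y : X) : Prop :=
  (Strength P y x < Strength P x y)%R.

Definition gocha (P : V -> rel X) (x y : X) : Prop :=
  exists_majority_path P x y /\ ~ exists_majority_path P y x.

Definition Pairs (P : V -> rel X) : {set X * X} :=
  [set ab | (ab.1 != ab.2) && (0 <= margin P ab.1 ab.2)%R].

Definition tie_breaker (P : V -> rel X) (L : rel (X * X)) : Prop :=
  [/\ {in Pairs P, irreflexive L},
      {in Pairs P & &, transitive L} &
      {in Pairs P &, forall p q, p != q -> L p q || L q p}].

Definition rp_order (P : V -> rel X) (L : rel (X * X)) : rel (X * X) :=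
  fun p q => (margin P q.1 q.2 < margin P p.1 p.2)%R
             || ((margin P p.1 p.2 == margin P q.1 q.2) && ((p == q) || L p q)).

Definition rp_list (P : V -> rel X) (L : rel (X * X)) : seq (X * X) :=
  sort (rp_order P L) (enum (Pairs P)).

Definition acyclic (D : {set X * X}) : bool :=
  [forall a, ~~ [exists b, ((a, b) \in D) && connect (fun u w => (u, w) \in D) b a]].

Definition rp_step (D : {set X * X}) (ab : X * X) : {set X * X} :=
  if acyclic (ab |: D) then ab |: D else (ab.2, ab.1) |: D.

Definition rp_L (P : V -> rel X) (L : rel (X * X)) : {set X * X} :=
  foldl rp_step set0 (rp_list P L).

Definition rp (P : V -> rel X) (x y : X) : Prop :=
  forall L, tie_breaker P L -> (x, y) \in rp_L P L.

End Voting.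

(* Main.v *)
Require Import Defs.
From HB Require Import structures.
From mathcomp Require Import all_boot all_order all_algebra.
From mathcomp Require Import boolp.
Import Order.TTheory GRing.Theory Num.Theory.

Set Implicit Arguments. Unset Strict Implicit.
Section Helpers.
Variables (V X : finType).
Implicit Types (D : {set X * X}) (P : V -> rel X).

Definition er D : rel X := fun u w => (u, w) \in D.

Lemma connect_add D (e : X * X) u w :
  connect (er (e |: D)) u w ->
  connect (er D) u w \/ (connect (er D) u e.1 /\ connect (er D) e.2 w).
Proof.
case/connectP=> p; elim: p u => [|v p IH] u /=.
  by move=> _ ->; left.
case/andP=> huv hp hw; have [h|[h1 h2]] := IH v hp hw.
- move: huv; rewrite /er in_setU1 => /orP[/eqP E|huv]; first subst e.
    by right; split => //=.
  by left; apply: connect_trans (connect1 huv) h.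
- move: huv; rewrite /er in_setU1 => /orP[/eqP E|huv]; first subst e.
    by right; split => //=.
  by right; split=> //; apply: connect_trans (connect1 huv) h1.
Qed.

Lemma acyc_add D (e : X * X) :
  acyclic D -> ~~ acyclic (e |: D) -> connect (er D) e.2 e.1.
Proof.
move=> acD' nac; apply/negPn/negP => nc; move/negP: nac; apply.
move/forallP: acD' => acD.
apply/forallP => a; apply/negP => /existsP[c /andP[hac hca]].
have [h|[h1 h2]] := connect_add hca.
- move: hac; rewrite in_setU1 => /orP[/eqP E|hac].
    by subst e; move/negP: nc.
  by move: (acD a); apply/negP/negPn/existsP; exists c; rewrite hac.
- move: hac; rewrite in_setU1 => /orP[/eqP E|hac].
    by subst e; move/negP: nc.
  move/negP: nc; apply; apply: connect_trans h2 _.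
  by apply: connect_trans (connect1 hac) h1.
Qed.

Lemma acyc_rev D (a b : X) :
  acyclic D -> connect (er D) b a -> a != b -> acyclic ((b, a) |: D).
Proof.
move=> acD hba nab; apply/negPn/negP => /(acyc_add acD) /= hab.
move/forallP: acD => /(_ a) /negP; apply; move: hab.
case/connectP=> [[|c p]] /=; first by move=> _ E; rewrite E eqxx in nab.
case/andP=> hac hp E; apply/existsP; exists c; apply/andP; split => //.
apply: connect_trans hba; by apply/connectP; exists p.
Qed.

Definition good P D := forall u w, (u, w) \in D -> exists_majority_path P u w.

Lemma mp_cat P x p y q z :
  majority_path P x p y -> majority_path P y q z -> majority_path P x (p ++ q) z.
Proof.
case/and3P=> hp1 hp2 /eqP hp3; case/and3P=> hq1 hq2 /eqP hq3.
apply/and3P; split.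
- by case: p hp1 hp2 hp3.
- by rewrite cat_path hp2 hp3.
- by rewrite last_cat hp3 hq3.
Qed.

Lemma connect_good P D u w :
  good P D -> connect (er D) u w -> u = w \/ exists_majority_path P u w.
Proof.
move=> gD /connectP[p]; elim: p u => [|v p IH] u /=; first by move=> _ ->; left.
case/andP=> huv hp hw; have [p1 hp1] := gD _ _ huv.
have [<-|[q hq]] := IH v hp hw; first by right; exists p1.
by right; exists (p1 ++ q); apply: mp_cat hp1 hq.
Qed.

Lemma margin_xx P a : margin P a a = 0%R.
Proof. by rewrite /margin subrr. Qed.

Lemma step_inv P D a b :
  acyclic D -> good P D -> (0 < margin P a b)%R ->
  acyclic (rp_step D (a, b)) /\ good P (rp_step D (a, b)).
Proof.
move=> acD gD hm; have nab : a != b.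
  by apply/eqP => E; move: hm; rewrite E margin_xx ltxx.
rewrite /rp_step; case: ifP => hac.
  split=> // u w; rewrite in_setU1 => /orP[/eqP [-> ->]|]; last exact: gD.
  by exists [:: b]; rewrite /majority_path /= hm eqxx.
have hba := acyc_add acD (negbT hac); rewrite /= in hba; split; first exact: acyc_rev.
move=> u w; rewrite in_setU1 => /orP[/eqP [-> ->]|]; last exact: gD.
have [E|//] := connect_good gD hba.
by rewrite E eqxx in nab.
Qed.

Lemma fold_inv P D s :
  all (fun e : X * X => (0 < margin P e.1 e.2)%R) s -> acyclic D -> good P D ->
  acyclic (foldl (@rp_step X) D s) /\ good P (foldl (@rp_step X) D s).
Proof.
elim: s D => [|[a b] s IH] D //= /andP[hm hs] acD gD.
have [h1 h2] := step_inv acD gD hm; exact: IH.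
Qed.

Lemma fold_grow D s e : e \in D -> e \in foldl (@rp_step X) D s.
Proof.
elim: s D => [|f s IH] D //= he; apply: IH.
by rewrite /rp_step; case: ifP => _; rewrite in_setU1 he orbT.
Qed.

End Helpers.

Theorem proposition3p8 (V X : finType) (P : V -> rel X) :
  (0 < #|V|)%N -> (0 < #|X|)%N -> is_profile P ->
  forall x y : X,
    (0 < margin P x y)%R -> ~ exists_majority_path P y x ->
    [/\ rp P x y, bp P x y & gocha P x y].
Proof.
move=> _ _ _ x y hm nyx.
have nxy : x != y.
  by apply/eqP => E; move: hm; rewrite E margin_xx ltxx.
have hmp : majority_path P x [:: y] y by rewrite /majority_path /= hm eqxx.
split; last by split=> //; exists [:: y].
- move=> L [_ _ Ltot].
  have xys : (x, y) \in rp_list P L.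
    by rewrite mem_sort mem_enum inE /= nxy ltW.
  have sortd : sorted (fun p q : X * X => (margin P q.1 q.2 <= margin P p.1 p.2)%R)
                 (rp_list P L).
    apply: (sub_sorted _ (sort_sorted_in (P := mem (Pairs P)) _ _)).
    - move=> p q /orP[/ltW //|/andP[/eqP -> _]]; done.
    - move=> p q hp hq; rewrite /rp_order.
      case: (ltgtP (margin P q.1 q.2) (margin P p.1 p.2)) => //= E.
      case: (eqVneq p q) => //= npq; by case/orP: (Ltot p q hp hq npq) => ->; rewrite ?orbT.
    - by apply/allP => z; rewrite mem_enum.
  rewrite sorted_pairwise in sortd; last first.
    by move=> a b c h1 h2; apply: le_trans h2 h1.
  rewrite /rp_L; move: (rp_list P L) xys sortd => s xys.
  case/splitPr: xys => s1 s2; rewrite pairwise_cat => /and3P[hall _ _].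
  have hpos : all (fun e : X * X => (0 < margin P e.1 e.2)%R) s1.
    apply/allP => e he; move/allrelP: hall => /(_ e (x, y) he (mem_head _ _)) h.
    exact: lt_le_trans hm h.
  have ac0 : acyclic (set0 : {set X * X}).
    by apply/forallP => a; apply/negP => /existsP[b]; rewrite inE.
  have g0 : good P (set0 : {set X * X}) by move=> u w; rewrite inE.
  have [acD gD] := fold_inv hpos ac0 g0.
  rewrite foldl_cat /=; apply: fold_grow.
  rewrite /rp_step ifT ?setU11 //.
  apply/negPn/negP => /(acyc_add acD) /= hyx.
  have [E|//] := connect_good gD hyx.
  by rewrite E eqxx in nxy.
- rewrite /bp /Strength.
  rewrite big_pred0 => [|k]; last first.
    by rewrite asboolF // => -[p [hp _]]; apply: nyx; exists p.
  have hm' := hm; rewrite /margin subr_gt0 ltz_nat in hm'.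
  move: hm; rewrite /margin subzn ?(ltnW hm') // ltz_nat => hm.
  set m := (_ - _)%N in hm.
  have mV : (m < #|V|.+1)%N.
    by rewrite ltnS /m (leq_trans (leq_subr _ _)) // max_card.
  apply: leq_trans hm _.
  apply: (leq_bigmax_cond (Ordinal mV)).
  apply: asboolT; exists [:: y]; split=> //.
  by rewrite /path_strength /= /margin subzn ?(ltnW hm').
Qed.
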